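(* Let $D=(D_1,D_2)\in\mathcal{U}(n,s_1\cdots s_p s_{p+1}\cdots s_{p+q})$ be a U-type design whose first $p$ factors are qualitative and last $q$ factors are quantitative, with rows $x_i=(x_{i1},\dots,x_{i,p+q})$, $i=1,\dots,n$, where the quantitative entries are the transformed values in $[0,1]$. Then the squared qualitative-quantitative discrepancy of $D$ equals $$\mathrm{QQD}^2(D)=C+\frac{1}{n^2}\sum_{i,j=1}^{n}\left(\frac{5}{4}\right)^p\left(\frac{6}{5}\right)^{\delta_{ij}(D_1)}\prod_{k=p+1}^{p+q}\left(\frac{3}{2}-|x_{ik}-x_{jk}|+|x_{ik}-x_{jk}|^2\right),$$ where $C=-\prod_{k=1}^{p}\left(\frac{5s_k+1}{4s_k}\right)\left(\frac{4}{3}\right)^q$ and $\delta_{ij}(D_1)$ is the number of coordinates $k\in\{1,\dots,p\}$ with $x_{ik}=x_{jk}$ (the coincidence number of rows $i$ and $j$ of $D_1$).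
   Context: A U-type design in $\mathcal{U}(n,s_1\cdots s_{p+q})$ is an $n\times(p+q)$ matrix whose $k$th column takes each value in $\{0,1,\dots,s_k-1\}$ equally often. The first $p$ columns ($D_1$) are qualitative factors, the last $q$ columns ($D_2$) quantitative. For the quantitative columns ($k=p+1,\dots,p+q$) a level $x\in\{0,\dots,s_k-1\}$ is transformed to $(2x+1)/(2s_k)\in[0,1]$, and $x_{ik}$ denotes this transformed value. Let $\chi=\chi_1\times\cdots\times\chi_{p+q}$ with $\chi_k=\{0,\dots,s_k-1\}$ for $k\le p$ and $\chi_k=[0,1]$ for $k>p$, and let $F$ be the uniform distribution on $\chi$ (product of discrete uniform distributions on the $\chi_k$, $k\le p$, and Lebesgue measure on $[0,1]$ for $k>p$). Define the kernel $\mathcal{K}(t,z)=\prod_{k=1}^{p+q}\mathcal{K}_k(t_k,z_k)$, where $\mathcal{K}_k(t_k,z_k)=(3/2)^{\delta_{t_kz_k}}(5/4)^{1-\delta_{t_kz_k}}$ for $k\le p$ ($\delta_{tz}=1$ if $t=z$ and $0$ otherwise) and $\mathcal{K}_k(t_k,z_k)=\frac32-|t_k-z_k|+|t_k-z_k|^2$ for $k>p$. The squared qualitative-quantitative discrepancy (QQD) of $D$ with rows $x_1,\dots,x_n$ is $$\mathrm{QQD}^2(D)=\int_{\chi^2}\mathcal{K}(t,z)\,dF(t)\,dF(z)-\frac{2}{n}\sum_{i=1}^n\int_\chi\mathcal{K}(t,x_i)\,dF(t)+\frac{1}{n^2}\sum_{i,j=1}^n\mathcal{K}(x_i,x_j).$$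 *)

(* Defs.v *)
From HB Require Import structures.
From mathcomp Require Import all_boot all_order all_algebra.
From mathcomp Require Import all_classical all_reals all_analysis.
Set Implicit Arguments. Unset Strict Implicit. Unset Printing Implicit Defensive.
Import Order.TTheory GRing.Theory Num.Theory.
Local Open Scope ring_scope.
Local Open Scope classical_set_scope.

Section QQD.
Variable R : realType.

Definition utype (n m : nat) (s : 'I_m -> nat) (D : 'I_n -> 'I_m -> nat) : Prop :=
  forall k : 'I_m,
    (forall i, (D i k < s k)%N) /\
    (forall v w, (v < s k)%N -> (w < s k)%N ->
       #|[set i | D i k == v]| = #|[set i | D i k == w]|).

Definition transf (s x : nat) : R := (2 * x + 1)%:R / (2 * s)%:R.

(* integral against the discrete uniform distribution on
   chi_1 x ... x chi_p, chi_k = {0,...,s k - 1} *)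
Definition dint (p : nat) (s : 'I_p -> nat) (f : ('I_p -> nat) -> R) : R :=
  (\prod_(k < p) (s k)%:R)^-1 *
  \sum_(t : {dffun forall k : 'I_p, 'I_(s k)}) f (fun k => nat_of_ord (t k)).

Definition ocons (q : nat) (x : R) (u : 'I_q -> R) : 'I_q.+1 -> R :=
  fun i => match unlift ord0 i with Some j => u j | None => x end.

(* integral against Lebesgue measure on [0,1]^q (iterated integrals) *)
Fixpoint cint (q : nat) : (('I_q -> R) -> R) -> R :=
  match q with
  | 0 => fun f => f (fun _ => 0)
  | q'.+1 => fun f =>
      Rintegral (@lebesgue_measure R) `[0%R, 1%R]
        (fun x => cint (fun u => f (ocons x u)))
  end.

Definition chiint (p q : nat) (s : 'I_p -> nat)
  (f : ('I_p -> nat) -> ('I_q -> R) -> R) : R :=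
  dint s (fun t => cint (fun u => f t u)).

Definition Kqual (p : nat) (t z : 'I_p -> nat) : R :=
  \prod_(k < p) (if t k == z k then 3 / 2 else 5 / 4).
Definition Kquan (q : nat) (t z : 'I_q -> R) : R :=
  \prod_(k < q) (3 / 2 - `|t k - z k| + `|t k - z k| ^+ 2).
Definition Kern (p q : nat) (t1 : 'I_p -> nat) (t2 : 'I_q -> R)
  (z1 : 'I_p -> nat) (z2 : 'I_q -> R) : R := Kqual t1 z1 * Kquan t2 z2.

(* squared QQD of D = (D1, D2); D2 holds the levels of the quantitative
   factors, transformed by transf. *)
Definition QQD2 (n p q : nat) (s1 : 'I_p -> nat) (s2 : 'I_q -> nat)
  (D1 : 'I_n -> 'I_p -> nat) (D2 : 'I_n -> 'I_q -> nat) : R :=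
  let x2 := fun i k => transf (s2 k) (D2 i k) in
  chiint s1 (fun t1 (t2 : 'I_q -> R) => chiint s1 (fun z1 (z2 : 'I_q -> R) => Kern t1 t2 z1 z2))
  - 2 / n%:R * \sum_(i < n) chiint s1 (fun t1 t2 => Kern t1 t2 (D1 i) (x2 i))
  + 1 / (n%:R ^+ 2) * \sum_(i < n) \sum_(j < n) Kern (D1 i) (x2 i) (D1 j) (x2 j).

Definition coinc (n p : nat) (D1 : 'I_n -> 'I_p -> nat) (i j : 'I_n) : nat :=
  #|[set k : 'I_p | D1 i k == D1 j k]|.

End QQD.

(* Main.v *)
Require Import Defs.
From HB Require Import structures.
From mathcomp Require Import all_boot all_order all_algebra.
From mathcomp Require Import all_classical all_reals all_analysis.
From mathcomp Require Import ring lra zify.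
Import Order.TTheory GRing.Theory Num.Theory numFieldNormedType.Exports.
Local Open Scope ring_scope.
Local Open Scope classical_set_scope.

Lemma sum_dffun_prod (R : comNzRingType) (I : finType) (T_ : I -> finType)
  (F : forall i, T_ i -> R) :
  \sum_(t : {dffun forall i, T_ i}) \prod_i F i (t i) = \prod_i \sum_(j : T_ i) F i j.
Proof.
rewrite (reindex (@dffun_of_fprod I T_)); last exact/onW_bij/dffun_of_fprod_bij.
have -> : \sum_(t : fprod T_) \prod_i F i (dffun_of_fprod t i) =
   \sum_(t : fprod T_) \prod_(i in I) [ffun j => F i j] (t i).
  by apply: eq_bigr => t _; apply: eq_bigr => i _; rewrite /dffun_of_fprod !ffunE.
rewrite big_fprod.
have -> : \prod_i \sum_(j : T_ i) F i j =
   \prod_i \sum_(j in tagged_with T_ i) untag 0 ([ffun j => F i j]) j.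
  apply: eq_bigr => i _.
  rewrite -(big_tag (fun i j => [ffun j => F i j] j)).
  by apply: eq_bigr => j _; rewrite ffunE.
by rewrite bigA_distr_big_dep.
Qed.

Section S.
Variable R : realType.
Notation mu := (@lebesgue_measure R).


Lemma poly_FTC (p : {poly R}) (x y : R) : x <= y ->
  Rintegral mu `[x, y] (fun z => (deriv p).[z]) = p.[y] - p.[x].
Proof.
rewrite le_eqVlt => /predU1P[<-|xy].
  by rewrite set_itv1 Rintegral_set1 subrr.
rewrite /Rintegral (@continuous_FTC2 _ _ (horner p)) //.
- by apply: derivable_within_continuous => z _; exact: derivable_horner.
- split.
  + by move=> z _; exact: derivable_horner.
  + by apply: cvg_at_right_filter; exact: continuous_horner.
  + by apply: cvg_at_left_filter; exact: continuous_horner.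
- by move=> z _; rewrite derive1E derive_val.
Qed.

Lemma gabs_cont (a : R) :
  continuous (fun z : R => 3 / 2 - `|z - a| + `|z - a| ^+ 2 : R).
Proof.
move=> z.
have h : (fun z0 : R => `|z0 - a|) @ z --> `|z - a|.
  by apply: cvg_norm; apply: cvgB; [exact: cvg_id | exact: cvg_cst].
apply: cvgD; first by apply: cvgB; [exact: cvg_cst | exact: h].
by rewrite expr2; under eq_fun do rewrite expr2; apply: cvgM.
Qed.

Lemma gabs_int (a : R) :
  mu.-integrable `[0, 1] (EFin \o (fun z : R => 3 / 2 - `|z - a| + `|z - a| ^+ 2 : R)).
Proof.
apply: continuous_compact_integrable; first exact: segment_compact.
apply: continuous_subspaceT. exact: gabs_cont.
Qed.

Lemma gabs_val (a : R) : 0 <= a <= 1 ->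
  Rintegral mu `[0%R, 1%R] (fun z : R => 3 / 2 - `|z - a| + `|z - a| ^+ 2) = 4 / 3.
Proof.
move=> /andP[a0 a1].
set g := (fun z : R => _).
have ig := gabs_int a.
have H := @Rintegral_itvB R g (BLeft 0) (BRight 1) a ig.
have {H}H := H ltac:(by rewrite bnd_simp) ltac:(by rewrite bnd_simp).
have E : Rintegral mu `[0%R, 1%R] g =
   Rintegral mu `[0%R, a] g + Rintegral mu `[a, 1%R] g.
  rewrite -Rintegral_itv_obnd_cbnd; last first.
    by apply: integrableS ig => //; apply: subset_itvr; rewrite bnd_simp.
  by rewrite -H addrC subrK.
pose Q1 : {poly R} := a%:P - 'X.
pose P1 : {poly R} := (3/2) *: 'X + (1/2) *: (Q1 * Q1) - (1/3) *: (Q1 * Q1 * Q1).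
pose Q2 : {poly R} := 'X - a%:P.
pose P2 : {poly R} := (3/2) *: 'X - (1/2) *: (Q2 * Q2) + (1/3) *: (Q2 * Q2 * Q2).
have E1 : Rintegral mu `[0%R, a] g = P1.[a] - P1.[0].
  rewrite -poly_FTC //.
  apply: eq_Rintegral => z; rewrite inE /= in_itv /= => /andP[_ za].
  rewrite /g /P1 /Q1 !poly.derivE !hornerE /=.
  rewrite distrC ger0_norm ?subr_ge0 //.
  by field.
have E2 : Rintegral mu `[a, 1%R] g = P2.[1] - P2.[a].
  rewrite -poly_FTC //.
  apply: eq_Rintegral => w; rewrite inE /= in_itv /= => /andP[aw _].
  rewrite /g /P2 /Q2 !poly.derivE !hornerE /=.
  rewrite ger0_norm ?subr_ge0 //.
  by field.
transitivity (Rintegral mu `[0%R, 1%R] g); first by [].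
rewrite E E1 E2 /P1 /P2 /Q1 /Q2 !hornerE /=.
by field.
Qed.

Lemma ocons0 q (x : R) (u : 'I_q -> R) : ocons x u ord0 = x.
Proof. by rewrite /ocons unlift_none. Qed.

Lemma oconsS q (x : R) (u : 'I_q -> R) k : ocons x u (lift ord0 k) = u k.
Proof. by rewrite /ocons liftK. Qed.

Lemma cint_ext q (f g : ('I_q -> R) -> R) :
  (forall u, (forall k, 0 <= u k <= 1) -> f u = g u) -> cint f = cint g.
Proof.
elim: q f g => [|q IH] f g H /=.
  by apply: H => -[].
apply: eq_Rintegral => x; rewrite inE /= in_itv /= => x01.
apply: IH => u Hu; apply: H => k.
rewrite /ocons; case: unliftP => [j _|_] //.
Qed.

Lemma cint_prod q (g : 'I_q -> R -> R) (c : R) :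
  (forall k, mu.-integrable `[0%R, 1%R] (EFin \o g k)) ->
  cint (fun u => c * \prod_k g k (u k)) =
  c * \prod_k Rintegral mu `[0%R, 1%R] (g k).
Proof.
elim: q g c => [|q IH] g c Hg /=.
  by rewrite !big_ord0.
have -> : (fun x => cint (fun u => c * \prod_(k < q.+1) g k (ocons x u k))) =
  (fun x => g ord0 x * (c * \prod_(k < q) Rintegral mu `[0%R, 1%R] (g (lift ord0 k)))).
  apply/funext => x.
  have -> : (fun u => c * \prod_(k < q.+1) g k (ocons x u k)) =
     (fun u => (c * g ord0 x) * \prod_(k < q) g (lift ord0 k) (u k)).
    apply/funext => u; rewrite big_ord_recl ocons0 mulrA; congr (_ * _).
    by apply: eq_bigr => k _; rewrite oconsS.
  rewrite (IH (fun k => g (lift ord0 k)) (c * g ord0 x)); last by move=> k; exact: (Hg (lift ord0 k)).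
  by rewrite mulrA [g ord0 x * c]mulrC.
rewrite RintegralZr //.
by rewrite big_ord_recl mulrCA mulrA.
Qed.

Lemma cint_const q (c : R) : cint (fun _ : 'I_q -> R => c) = c.
Proof.
have -> : (fun _ : 'I_q -> R => c) = (fun u => c * \prod_(k < q) (fun _ (_ : R) => 1 : R) k (u k)).
  by apply/funext => u; rewrite big1 ?mulr1.
rewrite (@cint_prod q (fun _ _ => 1)).
  rewrite big1 ?mulr1 // => k _.
  transitivity (Rintegral mu `[0%R, 1%R] (fun z => (deriv 'X).[z])).
    by apply: eq_Rintegral => z _; rewrite poly.derivE hornerC.
  by rewrite poly_FTC ?ler01 // !hornerX subr0.
move=> k; apply: continuous_compact_integrable; first exact: segment_compact.
by apply: continuous_subspaceT => z; exact: cvg_cst.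
Qed.


Lemma Kquan_intL q (a : 'I_q -> R) (c : R) : (forall k, 0 <= a k <= 1) ->
  cint (fun u => c * Kquan a u) = c * (4 / 3) ^+ q.
Proof.
move=> Ha.
have -> : (fun u => c * Kquan a u) = (fun u => c * \prod_(k < q)
     (fun k (z : R) => 3 / 2 - `|z - a k| + `|z - a k| ^+ 2) k (u k)).
  by apply/funext => u; rewrite /Kquan; congr (_ * _); apply: eq_bigr => k _; rewrite distrC.
rewrite (@cint_prod q (fun k (z : R) => 3 / 2 - `|z - a k| + `|z - a k| ^+ 2)); last first.
  by move=> k; exact: gabs_int.
congr (_ * _); rewrite -[in RHS](card_ord q) -prodr_const.
by apply: eq_bigr => k _; rewrite gabs_val.
Qed.

Lemma Kquan_intR q (a : 'I_q -> R) (c : R) : (forall k, 0 <= a k <= 1) ->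
  cint (fun u => c * Kquan u a) = c * (4 / 3) ^+ q.
Proof.
move=> Ha.
rewrite (@cint_prod q (fun k (z : R) => 3 / 2 - `|z - a k| + `|z - a k| ^+ 2)); last first.
  by move=> k; exact: gabs_int.
congr (_ * _); rewrite -[in RHS](card_ord q) -prodr_const.
by apply: eq_bigr => k _; rewrite gabs_val.
Qed.

Lemma sum_if (m a : nat) (x y : R) : (a < m)%N ->
  \sum_(j < m) (if a == (j : nat) then x else y) = x + y *+ (m - 1).
Proof.
move=> Ha.
rewrite (bigD1 (Ordinal Ha)) //= eqxx; congr (_ + _).
rewrite (eq_bigr (fun _ => y)); last first.
  move=> j hj; rewrite ifF //; apply/negP => /eqP e; move/eqP: hj; apply.
  by apply: val_inj; rewrite /= e.
rewrite sumr_const; congr (_ *+ _).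
have := cardC1 (Ordinal Ha); rewrite card_ord subn1 => <-.
by apply: eq_card => i; rewrite !inE.
Qed.


Lemma dint_ext p (s : 'I_p -> nat) (f g : ('I_p -> nat) -> R) :
  (forall t : 'I_p -> nat, (forall k, t k < s k)%N -> f t = g t) -> dint s f = dint s g.
Proof.
move=> H; rewrite /dint; congr (_ * _); apply: eq_bigr => t _; apply: H => k.
exact: ltn_ord.
Qed.

Lemma prods_neq0 p (s : 'I_p -> nat) : (forall k, 0 < s k)%N ->
  \prod_k ((s k)%:R : R) != 0.
Proof.
move=> H; rewrite prodf_seq_neq0; apply/allP => k _; rewrite pnatr_eq0 -lt0n; exact: H.
Qed.

Lemma dint_const p (s : 'I_p -> nat) (c : R) : (forall k, 0 < s k)%N ->
  dint s (fun _ => c) = c.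
Proof.
move=> H; rewrite /dint.
have -> : \sum_(t : {dffun forall k : 'I_p, 'I_(s k)}) c =
   c * \sum_(t : {dffun forall k : 'I_p, 'I_(s k)})
        \prod_k (fun k (j : 'I_(s k)) => 1 : R) k (t k).
  by rewrite big_distrr /=; apply: eq_bigr => t _; rewrite big1 ?mulr1.
rewrite (@sum_dffun_prod R _ _ (fun k (j : 'I_(s k)) => 1 : R)).
have -> : \prod_k \sum_(j : 'I_(s k)) (1 : R) = \prod_k ((s k)%:R : R).
  by apply: eq_bigr => k _; rewrite sumr_const card_ord.
by rewrite mulrCA mulVf ?mulr1 // prods_neq0.
Qed.

Lemma Kqual_dint1 p (s : 'I_p -> nat) (a : 'I_p -> nat) (c : R) :
  (forall k, a k < s k)%N ->
  dint s (fun z => Kqual R a z * c) =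
  \prod_(k < p) ((5 * s k + 1)%:R / (4 * s k)%:R) * c.
Proof.
move=> Ha; rewrite /dint /Kqual -big_distrl /= mulrA; congr (_ * _).
rewrite (@sum_dffun_prod R _ _ (fun k (j : 'I_(s k)) => if a k == j then 3/2 else 5/4 : R)).
rewrite -prodfV -big_split /=; apply: eq_bigr => k _.
rewrite sum_if //; have := Ha k; case: (s k) => // m _.
rewrite subn1 /=.
field; by rewrite addrC natr1 pnatr_eq0.
Qed.


Lemma Kqual_dint2 p (s : 'I_p -> nat) (a : 'I_p -> nat) (c : R) :
  (forall k, a k < s k)%N ->
  dint s (fun z => Kqual R z a * c) =
  \prod_(k < p) ((5 * s k + 1)%:R / (4 * s k)%:R) * c.
Proof.
move=> Ha; rewrite -(@Kqual_dint1 p s a c Ha); apply: dint_ext => t _.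
by congr (_ * _); apply: eq_bigr => k _; rewrite eq_sym.
Qed.

Lemma Kqual_coinc n p (D1 : 'I_n -> 'I_p -> nat) i j :
  Kqual R (D1 i) (D1 j) = (5 / 4) ^+ p * (6 / 5) ^+ coinc D1 i j.
Proof.
rewrite /Kqual /coinc.
have -> : \prod_(k < p) (if D1 i k == D1 j k then 3 / 2 else 5 / 4 : R) =
   \prod_(k < p) ((5 / 4) * (if D1 i k == D1 j k then 6 / 5 else 1)).
  by apply: eq_bigr => k _; case: ifP => _; field.
rewrite big_split /= prodr_const card_ord; congr (_ * _).
rewrite -big_mkcond /= prodr_const; congr (_ ^+ _).
apply/esym/eq_card => k. by apply/idP/idP; rewrite in_setE.
Qed.

End S.

Theorem theorem1 (R : realType) (n p q : nat) (s1 : 'I_p -> nat) (s2 : 'I_q -> nat)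
  (D1 : 'I_n -> 'I_p -> nat) (D2 : 'I_n -> 'I_q -> nat) :
  (0 < n)%N -> utype s1 D1 -> utype s2 D2 ->
  let x2 := fun i k => transf R (s2 k) (D2 i k) in
  QQD2 R s1 s2 D1 D2 =
    - (\prod_(k < p) ((5 * s1 k + 1)%:R / (4 * s1 k)%:R)) * (4 / 3) ^+ q
    + 1 / (n%:R ^+ 2) * \sum_(i < n) \sum_(j < n)
        ((5 / 4) ^+ p * (6 / 5) ^+ coinc D1 i j *
         \prod_(k < q) (3 / 2 - `|x2 i k - x2 j k| + `|x2 i k - x2 j k| ^+ 2)).
Proof.
move=> Hn H1 H2 x2.
have s1pos : forall k, (0 < s1 k)%N.
  by move=> k; exact: (leq_ltn_trans (leq0n _) ((H1 k).1 (Ordinal Hn))).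
have x2in : forall i k, 0 <= x2 i k <= 1.
  move=> i k; rewrite /x2 /transf; have := (H2 k).1 i.
  move: (s2 k) (D2 i k) => m d hd.
  apply/andP; split; first by rewrite divr_ge0.
  rewrite ler_pdivrMr; last by rewrite ltr0n; lia.
  by rewrite mul1r ler_nat; lia.
have T1 : chiint s1 (fun t1 (t2 : 'I_q -> R) =>
     chiint s1 (fun z1 (z2 : 'I_q -> R) => Kern t1 t2 z1 z2)) =
   \prod_(k < p) ((5 * s1 k + 1)%:R / (4 * s1 k)%:R) * (4 / 3) ^+ q.
  rewrite /chiint (@dint_ext R p s1 _ (fun _ =>
     \prod_(k < p) ((5 * s1 k + 1)%:R / (4 * s1 k)%:R) * (4 / 3) ^+ q : R)).
    exact: dint_const.
  move=> t1 Ht1; rewrite -[RHS](@cint_const R q); apply: cint_ext => t2 Ht2.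
  transitivity (dint s1 (fun z => Kqual R t1 z * (4 / 3) ^+ q)); last exact: Kqual_dint1.
  apply: dint_ext => z1 _; rewrite /Kern; exact: Kquan_intL.
have T2 : forall i, chiint s1 (fun t1 t2 => Kern t1 t2 (D1 i) (x2 i)) =
   \prod_(k < p) ((5 * s1 k + 1)%:R / (4 * s1 k)%:R) * (4 / 3) ^+ q.
  move=> i; rewrite /chiint.
  transitivity (dint s1 (fun t => Kqual R t (D1 i) * (4 / 3) ^+ q)); last first.
    by apply: Kqual_dint2 => k; exact: (H1 k).1.
  apply: dint_ext => t1 _; rewrite /Kern; exact: Kquan_intR.
rewrite /QQD2 -/x2 T1 (eq_bigr _ (fun i _ => T2 i)) sumr_const card_ord.
rewrite [X in _ + _ * X = _](_ : _ = \sum_(i < n) \sum_(j < n)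
        ((5 / 4) ^+ p * (6 / 5) ^+ coinc D1 i j *
         \prod_(k < q) (3 / 2 - `|x2 i k - x2 j k| + `|x2 i k - x2 j k| ^+ 2))); last first.
  by apply: eq_bigr => i _; apply: eq_bigr => j _; rewrite /Kern Kqual_coinc.
have n0 : (n%:R : R) != 0 by rewrite pnatr_eq0 -lt0n.
rewrite -mulr_natr.
by field.
Qed.
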